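(* Let $\alpha,\beta,\gamma$ be partitions with $\alpha_1\le 2$ and let $\Gamma$ be an LR-tableau of type $(\alpha,\beta,\gamma)$; let $x$ be the number of entries $1$ in $\Gamma$. Assume: (1) the number of entries $2$ in $\Gamma$ equals $x$ or $x-1$; (2) every row of $\Gamma$ contains at most one (non-empty) box; (3) if row $j$ contains an entry $2$ and row $i$ contains an entry $1$, then $j>i$. Then in the poset $(\mathcal D_\Gamma,\le_{\rm arc})$ all saturated chains have the same length.
   Context: For a partition $\lambda$, $\lambda'$ is its conjugate; the diagram of $\lambda$ is drawn with $\lambda'_i$ boxes in row $i$, so the $i$-th row of $\beta\setminus\gamma$ consists of the boxes in columns $\gamma'_i+1,\dots,\beta'_i$. With $\alpha_1\le2$, $\alpha'=(\alpha'_1,\alpha'_2)$. An LR-tableau of type $(\alpha,\beta,\gamma)$ is a filling of $\beta\setminus\gamma$ with $\alpha'_1$ entries $1$ and $\alpha'_2$ entries $2$, weakly increasing along rows, strictly increasing down columns, such that for each $c\ge0$ the number of entries $1$ in columns to the right of column $c$ is at least the number of entries $2$ there. Place positive integers on a line in decreasing order from left to right. An arc is a pair $(m,n)$, $m>n$ positive integers (source $m$, target $n$); a pole at $n$ is regarded as an arc $(\infty,n)$. An arc diagram of type $(\alpha,\beta,\gamma)$ is a finite multiset of $\alpha'_2$ arcs and $\alpha'_1-\alpha'_2$ poles with, for each $i$, exactly $\beta'_i-\gamma'_i$ members having source or target $i$. It has LR type $\Gamma$ if for each $i$ the number of arcs with source $i$ equals the number of entries $2$ in row $i$ of $\Gamma$;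 $\mathcal D_\Gamma$ is the set of such diagrams. Moves: for $a>b>c>d$, (A) replaces arcs $(a,c),(b,d)$ by $(a,d),(b,c)$; (C) replaces them by $(a,b),(c,d)$; for $a>b>c$, (B) replaces arc $(a,c)$ and pole $(\infty,b)$ by arc $(a,b)$ and pole $(\infty,c)$; (D) replaces them by arc $(b,c)$ and pole $(\infty,a)$. $\Delta\le_{\rm arc}\Delta'$ iff $\Delta$ is obtained from $\Delta'$ by a finite (possibly empty) sequence of moves. A chain is saturated if it has no refinement, i.e. is not properly contained in another chain of the poset. *)

(* Defs.v *)
From mathcomp Require Import all_boot.
From mathcomp Require Import finmap multiset.
From Stdlib Require Import Relation_Operators.

Set Implicit Arguments.
Unset Strict Implicit.
Unset Printing Implicit Defensive.

Local Open Scope mset_scope.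
Local Open Scope nat_scope.

Definition is_partition (l : seq nat) : bool :=
  sorted (fun a b => b <= a) l && all (fun p => 0 < p) l.

(* lambda_c  (1-based; 0 beyond the length) *)
Definition part (l : seq nat) (c : nat) : nat := nth 0 l c.-1.

(* conjugate partition: lambda'_i = #{ c | lambda_c >= i } (meaningful for i >= 1) *)
Definition conjpart (l : seq nat) (i : nat) : nat := count (fun p => i <= p) l.

(* Row i (i >= 1) of beta \ gamma consists of the boxes in columns
   gamma'_i + 1, ..., beta'_i. *)
Definition inskew (beta gamma : seq nat) (i c : nat) : bool :=
  (0 < i) && (conjpart gamma i < c <= conjpart beta i).

(* a bound on all row and column indices of boxes of beta *)
Definition bnd (beta : seq nat) : nat := (sumn beta).+1.

(* A filling of beta \ gamma is a function T : row -> column -> entry;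
   only its values on boxes of beta \ gamma matter. *)

Definition row_count (beta gamma : seq nat) (T : nat -> nat -> nat) (k i : nat) : nat :=
  \sum_(c < bnd beta) (inskew beta gamma i c && (T i c == k)).

Definition tab_count (beta gamma : seq nat) (T : nat -> nat -> nat) (k : nat) : nat :=
  \sum_(i < bnd beta) row_count beta gamma T k i.

Definition right_count (beta gamma : seq nat) (T : nat -> nat -> nat) (k c : nat) : nat :=
  \sum_(i < bnd beta) \sum_(c' < bnd beta | c < c')
     (inskew beta gamma i c' && (T i c' == k)).

(* T is an LR-tableau of type (alpha, beta, gamma), where alpha_1 <= 2, so
   alpha' = (alpha'_1, alpha'_2) with alpha'_k = conjpart alpha k. *)
Definition is_LR_tableau (alpha beta gamma : seq nat) (T : nat -> nat -> nat) : Prop :=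
  [/\ (forall c, part gamma c <= part beta c),
      (forall i c, inskew beta gamma i c -> T i c = 1 \/ T i c = 2),
      (tab_count beta gamma T 1 = conjpart alpha 1 /\
       tab_count beta gamma T 2 = conjpart alpha 2) &
      [/\
      (forall i c c', c < c' -> inskew beta gamma i c -> inskew beta gamma i c' ->
          T i c <= T i c'),
      (forall i i' c, i < i' -> inskew beta gamma i c -> inskew beta gamma i' c ->
          T i c < T i' c) &
      (forall c, right_count beta gamma T 2 c <= right_count beta gamma T 1 c)]].

(* A member is a pair (s, n): an arc (m, n) is (Some m, n), a pole at n is
   (None, n) (i.e. the arc (oo, n)). *)
Definition arc := (option nat * nat)%type.

Definition wf_arc (x : arc) : bool :=
  (0 < x.2) && (if x.1 is Some m then x.2 < m else true).

Definition is_pole (x : arc) : bool := x.1 == None.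

Definition touches (i : nat) (x : arc) : bool := (x.1 == Some i) || (x.2 == i).

Definition diagram := {mset arc}.

Definition src_count (D : diagram) (i : nat) : nat :=
  count (fun x : arc => x.1 == Some i) (enum_mset D).

Definition is_arc_diagram (alpha beta gamma : seq nat) (D : diagram) : Prop :=
  [/\ all wf_arc (enum_mset D),
      count (fun x => ~~ is_pole x) (enum_mset D) = conjpart alpha 2,
      count is_pole (enum_mset D) = conjpart alpha 1 - conjpart alpha 2 &
      forall i, 0 < i ->
        count (touches i) (enum_mset D) = conjpart beta i - conjpart gamma i].

Definition in_DGamma (alpha beta gamma : seq nat) (T : nat -> nat -> nat)
    (D : diagram) : Prop :=
  is_arc_diagram alpha beta gamma D /\
  forall i, 0 < i -> src_count D i = row_count beta gamma T 2 i.

Definition arc_move (D D' : diagram) : Prop :=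
  exists R : diagram,
    (exists a b c d, [/\ a > b, b > c, c > d &
       D' = [mset (Some a, c); (Some b, d)] `+` R /\
       (D = [mset (Some a, d); (Some b, c)] `+` R        (* (A) *)
        \/ D = [mset (Some a, b); (Some c, d)] `+` R)])  (* (C) *)
    \/
    (exists a b c, [/\ a > b, b > c &
       D' = [mset (Some a, c); (None, b)] `+` R /\
       (D = [mset (Some a, b); (None, c)] `+` R          (* (B) *)
        \/ D = [mset (Some b, c); (None, a)] `+` R)]).   (* (D) *)

Definition arc_le (D D' : diagram) : Prop := clos_refl_trans diagram arc_move D D'.

Definition is_chain (P : diagram -> Prop) (C : seq diagram) : Prop :=
  uniq C /\ (forall D, D \in C -> P D) /\
  (forall D E, D \in C -> E \in C -> arc_le D E \/ arc_le E D).

Definition saturated_chain (P : diagram -> Prop) (C : seq diagram) : Prop :=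
  is_chain P C /\
  forall C', is_chain P C' -> {subset C <= C'} -> {subset C' <= C}.

(* length of a chain x_0 < x_1 < ... < x_k is k *)
Definition chain_length (C : seq diagram) : nat := (size C).-1.

(* Main.v *)
Require Import Defs.
From mathcomp Require Import all_boot zify.
From mathcomp Require Import finmap multiset.
From Stdlib Require Import Relation_Operators Operators_Properties.
Set Implicit Arguments.
Unset Strict Implicit.
Unset Printing Implicit Defensive.
Local Open Scope mset_scope.
Local Open Scope nat_scope.


Lemma perm_msetD (A B : diagram) : perm_eq (A `+` B) (enum_mset A ++ enum_mset B).
Proof. by apply/allP => a _ /=; rewrite count_cat !count_mem_mset msetE2. Qed.

Lemma perm_D2 (x y : Defs.arc) (R : diagram) :
  perm_eq ([mset x; y] `+` R) [:: x, y & enum_mset R].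
Proof.
apply: (perm_trans (perm_msetD _ _)).
have -> : [:: x, y & enum_mset R] = [:: x; y] ++ enum_mset R by [].
rewrite perm_cat2r; apply: (perm_trans (perm_msetD _ _)).
by rewrite !enum_msetn.
Qed.

Lemma count_D2 (p : pred Defs.arc) x y (R : diagram) :
  count p (enum_mset ([mset x; y] `+` R)) = p x + p y + count p (enum_mset R).
Proof. by rewrite (permP (perm_D2 x y R)) /= addnA. Qed.

Lemma sum_D2 (f : Defs.arc -> nat) x y (R : diagram) :
  \sum_(m <- enum_mset ([mset x; y] `+` R)) f m = f x + f y + \sum_(m <- enum_mset R) f m.
Proof. by rewrite (perm_big _ (perm_D2 x y R)) !big_cons /= addnA. Qed.

Lemma mem_D2 z x y (R : diagram) :
  (z \in enum_mset ([mset x; y] `+` R)) = (z == x) || (z == y) || (z \in enum_mset R).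
Proof. by rewrite (perm_mem (perm_D2 x y R)) !inE orbA. Qed.

Lemma mset1E (x z : Defs.arc) : [mset x] z = (z == x).
Proof. by rewrite msetnE; case: eqP. Qed.

Ltac msolve := apply/msetP => ?; rewrite ?msetE2 ?mset1DE ?mset1E; lia.

Definition gtS (x y : option nat) : bool :=
  match x, y with
  | None, Some _ => true
  | Some a, Some b => b < a
  | _, _ => false
  end.

Lemma gtS_irr x : gtS x x = false.
Proof. by case: x => [a|] //=; rewrite ltnn. Qed.

Lemma gtS_trans x y z : gtS x y -> gtS y z -> gtS x z.
Proof. by case: x => [a|]; case: y => [b|]; case: z => [c|] //=; lia. Qed.

Lemma gtS_total x y : x != y -> gtS x y || gtS y x.
Proof.
case: x => [a|]; case: y => [b|] //= H.
have H' : a != b by apply: contraNneq H => ->.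
by rewrite -neq_ltn eq_sym.
Qed.

Lemma gtS_None x : gtS x None = false.
Proof. by case: x. Qed.

Definition cross (m m' : Defs.arc) : bool :=
  (gtS m.1 m'.1 && (m'.2 < m.2)) || (gtS m'.1 m.1 && (m.2 < m'.2)).

Lemma cross_irr m : cross m m = false.
Proof. by rewrite /cross gtS_irr. Qed.

Lemma crossC m m' : cross m m' = cross m' m.
Proof. by rewrite /cross orbC. Qed.

Ltac bsplit := repeat match goal with |- context [?x < ?y] => case: (ltnP x y) => ? end.

Lemma cross_swap (a' : option nat) (b c d : nat) (m : Defs.arc) :
  gtS a' (Some b) -> d < c -> m.1 != a' -> m.1 != Some b -> m.2 != c -> m.2 != d ->
  ~~ [&& gtS a' m.1, gtS m.1 (Some b), d < m.2 & m.2 < c] ->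
  (cross (a',c) m + cross (Some b, d) m = cross (a',d) m + cross (Some b,c) m) /\
  (cross m (a',c) + cross m (Some b, d) = cross m (a',d) + cross m (Some b,c)).
Proof.
case: m => [[s|] t]; case: a' => [a|] /=; rewrite /cross /=.
- move=> H1 H2 /eqP H3 /eqP H4 /eqP H5 /eqP H6 H7.
  have H3' : s <> a by move=> E; apply: H3; rewrite E.
  have H4' : s <> b by move=> E; apply: H4; rewrite E.
  move: H7; bsplit; simpl; lia.
- move=> H1 H2 _ /eqP H4 /eqP H5 /eqP H6 H7.
  have H4' : s <> b by move=> E; apply: H4; rewrite E.
  move: H7; bsplit; simpl; lia.
- move=> H1 H2 _ _ /eqP H5 /eqP H6 H7.
  move: H7; bsplit; simpl; lia.
- by [].
Qed.

Definition sv (m : Defs.arc) : nat := if m.1 is Some s then s else 0.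
Definition sigma (D : diagram) : nat := \sum_(m <- enum_mset D) sv m.
Definition rho (D : diagram) : nat := \sum_(m <- enum_mset D) \sum_(m' <- enum_mset D) cross m m'.

Lemma rho_D2 x y (R : diagram) :
  rho ([mset x; y] `+` R) = cross x y + cross y x +
    \sum_(m <- enum_mset R) (cross x m + cross y m + (cross m x + cross m y)) + rho R.
Proof.
rewrite /rho.
under eq_bigr do rewrite sum_D2.
rewrite sum_D2 !cross_irr !big_split /=.
lia.
Qed.

Definition gmove (D F : diagram) : Prop := exists a' b c d (R : diagram),
  [/\ gtS a' (Some b), c < b, d < c,
      F = [mset (a',c); (Some b, d)] `+` R &
      D = [mset (a',d); (Some b, c)] `+` R].

Lemma gmove_move D F : gmove D F -> arc_move D F.
Proof.
move=> [a' [b [c [d [R [H1 H2 H3 -> ->]]]]]].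
case: a' H1 => [a|] /= H1; exists R.
- by left; exists a, b, c, d; split => //; split => //; left.
- right; exists b, c, d; split => //; split.
  + by msolve.
  + by left; msolve.
Qed.

Lemma gmove_cnt D F (p : option nat -> bool) : gmove D F ->
  count (fun m : Defs.arc => p m.1) (enum_mset D) = count (fun m : Defs.arc => p m.1) (enum_mset F).
Proof.
move=> [a' [b [c [d [R [H1 H2 H3 -> ->]]]]]].
by rewrite !count_D2.
Qed.

Lemma move_sigma D E : arc_move D E -> sigma D < sigma E \/ gmove D E.
Proof.
move=> [R [[a [b [c [d [H1 H2 H3 [-> [->|->]]]]]]]|[a [b [c [H1 H2 [-> [->|->]]]]]]]].
- by right; exists (Some a), b, c, d, R.
- by left; rewrite /sigma !sum_D2 /sv /=; lia.
- right; exists None, a, b, c, R; split => //; msolve.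
- by left; rewrite /sigma !sum_D2 /sv /=; lia.
Qed.

Lemma arc_le_sig D E : arc_le D E ->
  sigma D <= sigma E /\ (sigma D = sigma E -> clos_refl_trans _ gmove D E).
Proof.
elim => [x y Hm | x | x y z _ [IH1 IH1'] _ [IH2 IH2']].
- case: (move_sigma Hm) => H; first by split; [exact: ltnW | lia].
  split; last by move=> _; apply: rt_step.
  suff -> : sigma x = sigma y by [].
  move: H => [a' [b [c [d [R [_ _ _ -> ->]]]]]].
  by rewrite /sigma !sum_D2.
- by split => // _; apply: rt_refl.
- split; first exact: leq_trans IH2.
  move=> Heq; apply: (rt_trans _ _ _ y); [apply: IH1' | apply: IH2']; lia.
Qed.

Lemma count_lt (T : eqType) (p q : pred T) (s : seq T) x :
  (forall y, p y -> q y) -> x \in s -> q x -> ~~ p x -> count p s < count q s.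
Proof.
move=> pq; elim: s => //= y s IH; rewrite inE => /orP [/eqP <- | xs] qx npx.
- rewrite qx (negbTE npx) /= add0n add1n ltnS; exact: sub_count.
- have := IH xs qx npx; case py: (p y); first by rewrite (pq y py) /=; lia.
  by case: (q y) => /=; lia.
Qed.

Lemma two_count (T : eqType) (p : pred T) (s : seq T) m m' :
  m != m' -> m \in s -> m' \in s -> p m -> p m' -> 1 < count p s.
Proof.
move=> nm ms m's pm pm'.
have H1 : 0 < count (pred1 m) s by rewrite -has_count; apply/hasP; exists m; rewrite /= ?eqxx.
have H2 : 0 < count (pred1 m') s by rewrite -has_count; apply/hasP; exists m'; rewrite /= ?eqxx.
have H3 := count_predUI (pred1 m) (pred1 m') s.
have H4 : count (predI (pred1 m) (pred1 m')) s = 0.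
  apply/eqP; rewrite -leqn0 leqNgt -has_count; apply/hasPn => z _ /=.
  by apply/andP => [[/eqP -> /eqP]]; apply/eqP.
have H5 : count (predU (pred1 m) (pred1 m')) s <= count p s.
  by apply: sub_count => z /= /orP [] /eqP ->.
lia.
Qed.

Lemma sum_bool (T : Type) (s : seq T) (a : pred T) : \sum_(x <- s) a x = count a s.
Proof. by elim: s => [|x s IH]; rewrite ?big_nil ?big_cons ?IH. Qed.

Lemma sum_const_seq (T : Type) (s : seq T) (c : nat) : \sum_(x <- s) c = size s * c.
Proof. by elim: s => [|x s IH]; rewrite ?big_nil ?big_cons ?IH ?mulSn. Qed.

Lemma seq_argmin (T : eqType) (f : T -> nat) (s : seq T) : s != [::] ->
  exists2 x, x \in s & forall y, y \in s -> f x <= f y.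
Proof.
elim: s => // x s IH _; case: (altP (s =P [::])) => [->|ns].
  by exists x; rewrite ?inE // => y; rewrite inE => /eqP ->.
case: (IH ns) => z zs Hz.
case: (leqP (f x) (f z)) => H.
- exists x; first by rewrite inE eqxx.
  move=> y; rewrite inE => /orP [/eqP -> // | ys]; exact: leq_trans H (Hz y ys).
- exists z; first by rewrite inE zs orbT.
  move=> y; rewrite inE => /orP [/eqP -> | ys]; [exact: ltnW | exact: Hz].
Qed.

Lemma seq_argmax (T : eqType) (f : T -> nat) (s : seq T) : s != [::] ->
  exists2 x, x \in s & forall y, y \in s -> f y <= f x.
Proof.
elim: s => // x s IH _; case: (altP (s =P [::])) => [->|ns].
  by exists x; rewrite ?inE // => y; rewrite inE => /eqP ->.
case: (IH ns) => z zs Hz.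
case: (leqP (f z) (f x)) => H.
- exists x; first by rewrite inE eqxx.
  move=> y; rewrite inE => /orP [/eqP -> // | ys]; exact: leq_trans (Hz y ys) H.
- exists z; first by rewrite inE zs orbT.
  move=> y; rewrite inE => /orP [/eqP -> | ys]; [exact: ltnW | exact: Hz].
Qed.

Lemma gtS_asym x y : gtS x y -> gtS y x = false.
Proof. by case: x => [a|]; case: y => [b|] //=; lia. Qed.

Lemma pair_neq (x y : Defs.arc) : (x.1 != y.1) || (x.2 != y.2) -> (x == y) = false.
Proof. by case: x => ? ?; case: y => ? ? /=; rewrite xpair_eqE => /orP [] /negbTE ->; rewrite ?andbF. Qed.

Section Core.
Variable P : diagram -> Prop.
Variable n0 : nat.
Hypothesis HPg : forall D F, gmove D F -> P F -> P D.
Hypothesis HPg' : forall D F, gmove D F -> P D -> P F.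
Hypothesis Hsig : forall D E, P D -> P E -> sigma D = sigma E.
Hypothesis Hwf : forall D m, P D -> m \in enum_mset D -> 0 < m.2.
Hypothesis Hst : forall D m m', P D -> m \in enum_mset D -> m' \in enum_mset D ->
  gtS m.1 (Some m'.2).
Hypothesis Htch : forall D i, P D -> 0 < i -> count (touches i) (enum_mset D) <= 1.
Hypothesis Hpole : forall D, P D -> count is_pole (enum_mset D) <= 1.
Hypothesis Hsize : forall D, P D -> size (enum_mset D) = n0.

Definition cov D F := [/\ P D, P F, gmove D F & rho F = rho D + 2].

Lemma sep_gen (p : pred Defs.arc) D x y R m :
  count p (enum_mset D) <= 1 -> D = [mset x; y] `+` R -> p x || p y ->
  m \in enum_mset R -> ~~ p m.
Proof.
move=> H HD Hxy Hm; rewrite HD count_D2 in H; apply/negP => pm.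
have : 0 < count p (enum_mset R) by rewrite -has_count; apply/hasP; exists m; rewrite /= ?eqxx.
by move: H Hxy; case: (p x); case: (p y) => //=; lia.
Qed.

Lemma cov_step D F a' b c d R :
  P F -> gtS a' (Some b) -> c < b -> d < c ->
  F = [mset (a',c); (Some b, d)] `+` R ->
  D = [mset (a',d); (Some b, c)] `+` R ->
  (forall m, m \in enum_mset R ->
     ~~ [&& gtS a' m.1, gtS m.1 (Some b), d < m.2 & m.2 < c]) ->
  rho F = rho D + 2.
Proof.
move=> PF H1 H2 H3 HF HD Hint.
have xF : (a', c) \in enum_mset F by rewrite HF mem_D2 eqxx.
have yF : (Some b, d) \in enum_mset F by rewrite HF mem_D2 eqxx orbT.
have c0 := Hwf PF xF; have d0 := Hwf PF yF.
have Hsum : \sum_(m <- enum_mset R)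
     (cross (a',c) m + cross (Some b,d) m + (cross m (a',c) + cross m (Some b,d))) =
   \sum_(m <- enum_mset R)
     (cross (a',d) m + cross (Some b,c) m + (cross m (a',d) + cross m (Some b,c))).
  apply: eq_big_seq => m mR.
  have Hc : ~~ touches c m.
    by apply: (sep_gen (Htch PF c0) HF _ mR); rewrite /touches /= eqxx orbT.
  have Hd : ~~ touches d m.
    by apply: (sep_gen (Htch PF d0) HF _ mR); rewrite /touches /= eqxx !orbT.
  have Hb : ~~ touches b m.
    apply: (sep_gen (Htch PF (i:=b) _) HF _ mR); first by lia.
    by rewrite /touches /= eqxx !orbT.
  have Ha : m.1 != a'.
    case Ea: a' => [a|].
    + have Ha : ~~ touches a m.
        apply: (sep_gen (Htch PF (i:=a) _) HF _ mR); first by move: H1; rewrite Ea /=; lia.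
        by rewrite /touches /= Ea eqxx.
      by move: Ha; rewrite /touches negb_or => /andP [].
    + have Hp : ~~ is_pole m.
        by apply: (sep_gen (Hpole PF) HF _ mR); rewrite /is_pole /= Ea eqxx.
      exact: Hp.
  move: Hc Hd Hb; rewrite /touches !negb_or => /andP [_ Hc] /andP [_ Hd] /andP [Hb _].
  have [E1 E2] := cross_swap H1 H3 Ha Hb Hc Hd (Hint m mR).
  by rewrite E1 E2.
rewrite HF HD !rho_D2 Hsum.
have -> : cross (a', c) (Some b, d) = true by rewrite /cross /= H1 H3.
have -> : cross (Some b, d) (a', c) = true by rewrite crossC /cross /= H1 H3.
have -> : cross (a', d) (Some b, c) = false by rewrite /cross H1 (gtS_asym H1) /= ltnNge (ltnW H3).
have -> : cross (Some b, c) (a', d) = false by rewrite crossC /cross H1 (gtS_asym H1) /= ltnNge (ltnW H3).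
set S := \sum_(m <- enum_mset R) _; set r := rho R.
simpl; lia.
Qed.

Lemma refine k : forall D F a' b c d R,
  count (fun m : Defs.arc => gtS a' m.1 && gtS m.1 (Some b)) (enum_mset F) < k ->
  gtS a' (Some b) -> c < b -> d < c ->
  F = [mset (a',c); (Some b, d)] `+` R ->
  D = [mset (a',d); (Some b, c)] `+` R ->
  P F -> clos_refl_trans _ cov D F.
Proof.
elim: k => // k IH D F a' b c d R Hk H1 H2 H3 HF HD PF.
have gDF : gmove D F by exists a', b, c, d, R.
case: (boolP (has (fun m : Defs.arc =>
   [&& gtS a' m.1, gtS m.1 (Some b), d < m.2 & m.2 < c]) (enum_mset R))); last first.
  move/hasPn => Hn; apply: rt_step; split => //; first exact: HPg PF.
  exact: cov_step PF H1 H2 H3 HF HD Hn.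
move/hasP => [[[s|] t] mR /and4P [h1 h2 h3 h4]]; last by rewrite gtS_None in h1.
move: h1 h2 h3 h4 => /= h1 h2 h3 h4.
set R' := R `\ (Some s, t).
have HR : R = (Some s, t) +` R' by rewrite msetB1K.
have mF : (Some s, t) \in enum_mset F by rewrite HF mem_D2 mR !orbT.
have xF : (a', c) \in enum_mset F by rewrite HF mem_D2 eqxx.
have hsc : c < s by have := Hst PF mF xF.
set G1 := [mset (a',t); (Some s,c)] `+` ([mset (Some b,d)] `+` R').
set G2 := [mset (Some s,d); (Some b,c)] `+` ([mset (a',t)] `+` R').
have gG1F : gmove G1 F.
  exists a', s, c, t, ([mset (Some b,d)] `+` R'); split => //.
  by rewrite HF HR; msolve.
have gG2G1 : gmove G2 G1.
  exists (Some s), b, c, d, ([mset (a',t)] `+` R'); split => //.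
  by rewrite /G1; msolve.
have gDG2 : gmove D G2.
  exists a', s, t, d, ([mset (Some b,c)] `+` R'); split => //.
  - exact: ltn_trans h4 hsc.
  - by rewrite /G2; msolve.
  - by rewrite HD HR; msolve.
have PG1 := HPg gG1F PF.
have PG2 := HPg gG2G1 PG1.
have c1 : count (fun m : Defs.arc => gtS a' m.1 && gtS m.1 (Some s)) (enum_mset F) <
          count (fun m : Defs.arc => gtS a' m.1 && gtS m.1 (Some b)) (enum_mset F).
  apply: (count_lt _ mF); last by rewrite /= ltnn andbF.
  - move=> [y1 y2] /= /andP [hy1 hy]; rewrite hy1 /=; apply: (gtS_trans hy); exact: h2.
  - by rewrite /= h1 h2.
have c2 : count (fun m : Defs.arc => gtS (Some s) m.1 && gtS m.1 (Some b)) (enum_mset F) <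
          count (fun m : Defs.arc => gtS a' m.1 && gtS m.1 (Some b)) (enum_mset F).
  apply: (count_lt _ mF); last by rewrite /= ltnn.
  - move=> [y1 y2] /= /andP [hy hy2]; rewrite hy2 andbT; exact: gtS_trans h1 hy.
  - by rewrite /= h1 h2.
have e1 : count (fun m : Defs.arc => gtS (Some s) m.1 && gtS m.1 (Some b)) (enum_mset G1) =
          count (fun m : Defs.arc => gtS (Some s) m.1 && gtS m.1 (Some b)) (enum_mset F) :=
  gmove_cnt (fun o => gtS (Some s) o && gtS o (Some b)) gG1F.
have e2 : count (fun m : Defs.arc => gtS a' m.1 && gtS m.1 (Some s)) (enum_mset G1) =
          count (fun m : Defs.arc => gtS a' m.1 && gtS m.1 (Some s)) (enum_mset F) :=
  gmove_cnt (fun o => gtS a' o && gtS o (Some s)) gG1F.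
have e3 : count (fun m : Defs.arc => gtS a' m.1 && gtS m.1 (Some s)) (enum_mset G2) =
          count (fun m : Defs.arc => gtS a' m.1 && gtS m.1 (Some s)) (enum_mset G1) :=
  gmove_cnt (fun o => gtS a' o && gtS o (Some s)) gG2G1.
apply: (rt_trans _ _ _ G2); last apply: (rt_trans _ _ _ G1).
- apply: (IH D G2 a' s t d ([mset (Some b,c)] `+` R')) => //.
  + rewrite e3 e2; apply: (leq_trans c1); by rewrite -ltnS.
  + exact: ltn_trans h4 hsc.
  + by rewrite /G2; msolve.
  + by rewrite HD HR; msolve.
- apply: (IH G2 G1 (Some s) b c d ([mset (a',t)] `+` R')) => //.
  + rewrite e1; apply: (leq_trans c2); by rewrite -ltnS.
  + by rewrite /G1; msolve.
- apply: (IH G1 F a' s c t ([mset (Some b,d)] `+` R')) => //.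
  + apply: (leq_trans c1); by rewrite -ltnS.
  + by rewrite HF HR; msolve.
Qed.

End Core.


Section Core3.
Variable P : diagram -> Prop.
Variable n0 : nat.
Hypothesis HPg : forall D F, gmove D F -> P F -> P D.
Hypothesis HPg' : forall D F, gmove D F -> P D -> P F.
Hypothesis Hsig : forall D E, P D -> P E -> sigma D = sigma E.
Hypothesis Hwf : forall D m, P D -> m \in enum_mset D -> 0 < m.2.
Hypothesis Hst : forall D m m', P D -> m \in enum_mset D -> m' \in enum_mset D ->
  gtS m.1 (Some m'.2).
Hypothesis Htch : forall D i, P D -> 0 < i -> count (touches i) (enum_mset D) <= 1.
Hypothesis Hpole : forall D, P D -> count is_pole (enum_mset D) <= 1.
Hypothesis Hsize : forall D, P D -> size (enum_mset D) = n0.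
Local Notation cov := (cov P).
Let refine := @refine P HPg Hwf Hst Htch Hpole.

Lemma gmove_cov D F : gmove D F -> P F -> clos_refl_trans _ cov D F.
Proof.
move=> [a' [b [c [d [R [H1 H2 H3 HF HD]]]]]] PF.
exact: (@refine _ D F a' b c d R (ltnSn _)).
Qed.

Lemma crt_gmove_P D E : clos_refl_trans _ gmove D E -> P E -> P D.
Proof.
elim => [x y H Py | x | x y z _ IH1 _ IH2 Pz] //; first exact: HPg H Py.
exact: IH1 (IH2 Pz).
Qed.

Lemma crt_gmove_cov D E : clos_refl_trans _ gmove D E -> P E ->
  clos_refl_trans _ cov D E.
Proof.
elim => [x y H Py | x | x y z Hxy IH1 Hyz IH2 Pz].
- exact: gmove_cov.
- move=> _; exact: rt_refl.
- apply: (rt_trans _ _ _ y); [apply: IH1 | apply: IH2 Pz].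
  exact: crt_gmove_P Hyz Pz.
Qed.

Lemma le_cov D E : arc_le D E -> P D -> P E -> clos_refl_trans _ cov D E.
Proof.
move=> /arc_le_sig [_ H] PD PE; exact: crt_gmove_cov (H (Hsig PD PE)) PE.
Qed.

Lemma cov_le D E : clos_refl_trans _ cov D E -> arc_le D E.
Proof.
elim => [x y [_ _ H _] | x | x y z _ IH1 _ IH2].
- by apply: rt_step; apply: gmove_move.
- exact: rt_refl.
- exact: rt_trans IH1 IH2.
Qed.

Lemma cov_rho D E : clos_refl_trans _ cov D E ->
  exists k, rho E = rho D + k.*2 /\ (k = 0 -> D = E).
Proof.
elim => [x y [_ _ _ H] | x | x y z _ [k1 [IH1 IH1']] _ [k2 [IH2 IH2']]].
- by exists 1; split.
- by exists 0; split; rewrite ?addn0.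
- exists (k1 + k2); split; first by rewrite IH2 IH1 doubleD addnA.
  move=> Hk; have h1 : k1 = 0 by lia.
  have h2 : k2 = 0 by lia.
  by rewrite IH1' // IH2'.
Qed.

Lemma cov_next D E : clos_refl_trans _ cov D E -> D <> E ->
  exists F, cov D F /\ clos_refl_trans _ cov F E.
Proof.
move=> H nDE; have H1 := clos_rt_rt1n _ _ _ _ H.
inversion H1 as [|y z Hy Hz]; first by subst.
by exists y; split => //; apply: clos_rt1n_rt.
Qed.

Lemma mem_msubset D (m m' : Defs.arc) : m != m' -> m \in enum_mset D -> m' \in enum_mset D ->
  D = [mset m; m'] `+` (D `\` [mset m; m']).
Proof.
move=> nm mD m'D; rewrite msetBDKC //; apply/msubsetP => z.
rewrite ?msetE2 ?mset1DE !mset1E.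
have Dm : 0 < D m by rewrite -in_mset.
have Dm' : 0 < D m' by rewrite -in_mset.
case: (altP (z =P m)) => [->|nzm]; first by rewrite (negbTE nm) /=.
case: (altP (z =P m')) => [->|nzm'] //=.
Qed.

Lemma min_aux D m m' : P D -> (forall E, P E -> arc_le E D -> E = D) ->
  m \in enum_mset D -> m' \in enum_mset D -> gtS m.1 m'.1 -> m'.2 < m.2 -> False.
Proof.
case: m => a' c; case: m' => [[b|] d] PD Hmin mD m'D /= H1 H2; last by rewrite gtS_None in H1.
have H3 : c < b by have := Hst PD m'D mD.
have nm : (a', c) != (Some b, d) by rewrite pair_neq //= orbC; apply/eqP; lia.
have HD := mem_msubset nm mD m'D.
set R := D `\` _ in HD.
pose E := [mset (a', d); (Some b, c)] `+` R.
have gED : gmove E D by exists a', b, c, d, R.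
have HE := Hmin E (HPg gED PD) (rt_step _ _ _ _ (gmove_move gED)).
have := congr1 (fun X : diagram => X (a', c)) HE.
rewrite {1}HD /= !msetE2 ?mset1DE !mset1E eqxx !pair_neq /=; first lia.
- by apply/orP; left; apply/eqP => Hb; rewrite Hb gtS_irr in H1.
- by apply/orP; left; apply/eqP => Hb; rewrite Hb gtS_irr in H1.
- by apply/orP; right; apply/eqP; lia.
Qed.

Lemma min_rho D : P D -> (forall E, P E -> arc_le E D -> E = D) -> rho D = 0.
Proof.
move=> PD Hmin; apply/eqP; apply: contraT => Hne.
have : has (fun m => has (cross m) (enum_mset D)) (enum_mset D).
  apply: contraR Hne => /hasPn H; rewrite /rho big1_seq // => m /andP [_ mD].
  apply: big1_seq => m' /andP [_ m'D].
  by have /hasPn := H m mD => /(_ m' m'D) /negbTE ->.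
move/hasP => [m mD /hasP [m' m'D]]; rewrite /cross => /orP [] /andP [h1 h2].
- by case: (min_aux PD Hmin mD m'D h1 h2).
- by case: (min_aux PD Hmin m'D mD h1 h2).
Qed.

Lemma max_aux D m m' : P D -> (forall E, P E -> arc_le D E -> E = D) ->
  m \in enum_mset D -> m' \in enum_mset D -> gtS m.1 m'.1 -> m.2 < m'.2 -> False.
Proof.
case: m => a' d; case: m' => [[b|] c] PD Hmax mD m'D /= H1 H2; last by rewrite gtS_None in H1.
have H3 : c < b by have := Hst PD m'D m'D.
have nm : (a', d) != (Some b, c) by rewrite pair_neq //= orbC; apply/eqP; lia.
have HD := mem_msubset nm mD m'D.
set R := D `\` _ in HD.
pose F := [mset (a', c); (Some b, d)] `+` R.
have gDF : gmove D F by exists a', b, c, d, R.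
have HF := Hmax F (HPg' gDF PD) (rt_step _ _ _ _ (gmove_move gDF)).
have := congr1 (fun X : diagram => X (a', c)) HF.
rewrite {1}HD /= !msetE2 ?mset1DE !mset1E eqxx !pair_neq /=; first lia.
- by apply/orP; left; apply/eqP => Hb; rewrite Hb gtS_irr in H1.
- by apply/orP; right; apply/eqP; lia.
- by apply/orP; left; apply/eqP => Hb; rewrite Hb gtS_irr in H1.
Qed.

Lemma max_rho D : P D -> (forall E, P E -> arc_le D E -> E = D) ->
  rho D = n0 * n0.-1.
Proof.
move=> PD Hmax.
have Hall : forall m m', m \in enum_mset D -> m' \in enum_mset D -> m' != m ->
    cross m m' = true.
  move=> m m' mD m'D nm; apply: contraNT (nm) => Hnc.
  have Hs : m.1 != m'.1.
    apply/negP => /eqP Es; case Em: m.1 Es => [s|] Es.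
    - have s0 : 0 < s.
        have := Hst PD mD mD; rewrite Em /= => h; exact: leq_ltn_trans (leq0n _) h.
      have := two_count (p := touches s) nm m'D mD.
      rewrite /touches Em -Es !eqxx /= => /(_ isT isT).
      by rewrite ltnNge (Htch PD s0).
    - have := two_count (p := is_pole) nm m'D mD.
      rewrite /is_pole Em -Es /= => /(_ isT isT).
      by rewrite ltnNge (Hpole PD).
  have Ht : m.2 != m'.2.
    apply/negP => /eqP Et.
    have t0 := Hwf PD mD.
    have := two_count (p := touches m.2) nm m'D mD.
    rewrite /touches -Et !eqxx !orbT => /(_ isT isT).
    by rewrite ltnNge (Htch PD t0).
  move: Hnc; rewrite /cross negb_or !negb_and -!leqNgt.
  case/orP: (gtS_total Hs) => Hg; rewrite Hg (gtS_asym Hg) /= ?andbT => h1.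
  - by exfalso; apply: (max_aux PD Hmax mD m'D Hg); rewrite ltn_neqAle Ht.
  - by exfalso; apply: (max_aux PD Hmax m'D mD Hg); rewrite ltn_neqAle eq_sym Ht.
have Hin : forall m, m \in enum_mset D ->
    \sum_(m' <- enum_mset D) cross m m' = n0.-1.
  move=> m mD.
  have -> : \sum_(m' <- enum_mset D) cross m m' = \sum_(m' <- enum_mset D) (m' != m).
    apply: eq_big_seq => m' m'D; case: (altP (m' =P m)) => [->|nm]; first by rewrite cross_irr.
    by rewrite Hall.
  rewrite sum_bool.
  have := count_predC (pred1 m) (enum_mset D).
  have c1 : count (pred1 m) (enum_mset D) = 1.
    apply/eqP; rewrite eqn_leq; apply/andP; split.
    + apply: leq_trans (Htch PD (Hwf PD mD)).
      by apply: sub_count => z /= /eqP ->; rewrite /touches eqxx orbT.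
    + by rewrite -has_count; apply/hasP; exists m; rewrite /= ?eqxx.
  rewrite c1 (Hsize PD) => <-.
  by rewrite add1n /=; apply: eq_count => z /=.
have -> : rho D = \sum_(m <- enum_mset D) n0.-1.
  by apply: eq_big_seq => m mD; rewrite Hin.
by rewrite sum_const_seq Hsize.
Qed.

Lemma chain_comp C D E : is_chain P C -> D \in C -> E \in C ->
  clos_refl_trans _ cov D E \/ clos_refl_trans _ cov E D.
Proof.
move=> [_ [HP Hc]] Dc Ec; case: (Hc D E Dc Ec) => H; [left|right].
- exact: le_cov H (HP _ Dc) (HP _ Ec).
- exact: le_cov H (HP _ Ec) (HP _ Dc).
Qed.

Lemma chain_inj C D E : is_chain P C -> D \in C -> E \in C -> rho D = rho E -> D = E.
Proof.
move=> Hch Dc Ec HDE; case: (chain_comp Hch Dc Ec) => H;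
  have [k [Hk Hk']] := cov_rho H.
- by apply: Hk'; lia.
- by symmetry; apply: Hk'; lia.
Qed.

Lemma chain_le C D E : is_chain P C -> D \in C -> E \in C -> rho D <= rho E ->
  clos_refl_trans _ cov D E.
Proof.
move=> Hch Dc Ec HDE; case: (chain_comp Hch Dc Ec) => // H.
have [k [Hk Hk']] := cov_rho H.
rewrite Hk' //; first exact: rt_refl.
lia.
Qed.

Lemma sat_extend C F : saturated_chain P C -> P F -> F \notin C ->
  (forall G, G \in C -> arc_le G F \/ arc_le F G) -> False.
Proof.
move=> [[uC [HP Hc]] Hmax] PF FnC Hcmp.
have Hch : is_chain P (F :: C).
  split; first by rewrite /= FnC uC.
  split.
  - by move=> D; rewrite inE => /orP [/eqP -> | ]; [done | apply: HP].
  - move=> D E; rewrite !inE => /orP [/eqP -> | Dc] /orP [/eqP -> | Ec].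
    + by left; apply: rt_refl.
    + by case: (Hcmp E Ec) => h; [right|left].
    + exact: Hcmp.
    + exact: Hc.
have Hsub : {subset C <= F :: C} by move=> x xC; rewrite inE xC orbT.
have := Hmax _ Hch Hsub F; rewrite inE eqxx => /(_ isT) FC.
by rewrite FC in FnC.
Qed.

Lemma sat_size C : saturated_chain P C -> C != [::] -> size C = (n0 * n0.-1)./2.+1.
Proof.
move=> Hs nC; have Hch := Hs.1; have HP : forall D, D \in C -> P D := Hch.2.1.
have uC : uniq C := Hch.1.
have [m mC Hm] := seq_argmin rho nC.
have [M MC HM] := seq_argmax rho nC.
have mmin : forall E, P E -> arc_le E m -> E = m.
  move=> E PE Em; case: (altP (E =P m)) => // nEm; exfalso.
  case: (boolP (E \in C)) => EC.
  - have [k [Hk Hk']] := cov_rho (le_cov Em PE (HP m mC)).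
    have := Hm E EC; rewrite Hk => h.
    have HE : E = m by apply: Hk'; lia.
    by rewrite HE eqxx in nEm.
  - apply: (sat_extend Hs PE EC) => G GC; right.
    exact: (rt_trans _ _ _ _ _ Em) (cov_le (chain_le Hch mC GC (Hm G GC))).
have Mmax : forall E, P E -> arc_le M E -> E = M.
  move=> E PE Em; case: (altP (E =P M)) => // nEM; exfalso.
  case: (boolP (E \in C)) => EC.
  - have [k [Hk Hk']] := cov_rho (le_cov Em (HP M MC) PE).
    have := HM E EC; rewrite Hk => h.
    have HE : M = E by apply: Hk'; lia.
    by rewrite HE eqxx in nEM.
  - apply: (sat_extend Hs PE EC) => G GC; left.
    exact: (rt_trans _ _ _ _ _ (cov_le (chain_le Hch GC MC (HM G GC))) Em).
have r0 := min_rho (HP m mC) mmin.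
have rM := max_rho (HP M MC) Mmax.
have Hev : forall D, D \in C -> rho D = (rho D)./2.*2 /\ rho D <= rho M.
  move=> D DC; split; last exact: HM.
  have [k [Hk _]] := cov_rho (chain_le Hch mC DC (Hm D DC)).
  by rewrite Hk r0 add0n doubleK.
have succ : forall D, D \in C -> rho D < rho M ->
    exists2 E, E \in C & rho E = rho D + 2.
  move=> D DC lt.
  set S := [seq E <- C | rho D < rho E].
  have nS : S != [::].
    apply/negP => /eqP HS.
    have : M \in S by rewrite mem_filter lt MC.
    by rewrite HS.
  have [E ES HE] := seq_argmin rho nS.
  move: ES; rewrite mem_filter => /andP [lDE EC].
  exists E => //.
  have HDE := chain_le Hch DC EC (ltnW lDE).
  have nDE : D <> E by move=> h; rewrite h ltnn in lDE.
  have [F [[PD PF gDF rF] HFE]] := cov_next HDE nDE.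
  case: (altP (rho E =P rho D + 2)) => // nE; exfalso.
  have [k [Hk _]] := cov_rho HFE.
  have lFE : rho F < rho E.
    move/eqP: nE; lia.
  have FnC : F \notin C.
    apply/negP => FC.
    have h2 : rho D < rho D + 2 by lia.
    have := HE F; rewrite mem_filter FC rF andbT => /(_ h2).
    lia.
  apply: (sat_extend Hs PF FnC) => G GC.
  case: (leqP (rho G) (rho D)) => hG.
  - left; apply: (rt_trans _ _ _ _ _ (cov_le (chain_le Hch GC DC hG))).
    by apply: rt_step; apply: gmove_move.
  - right; have := HE G; rewrite mem_filter hG GC => /(_ isT) hEG.
    exact: (rt_trans _ _ _ _ _ (cov_le HFE) (cov_le (chain_le Hch EC GC hEG))).
set K := (rho M)./2.
have HK : rho M = K.*2 := (Hev M MC).1.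
have Hmem : forall x, (x \in map (fun D => (rho D)./2) C) = (x < K.+1).
  move=> x; apply/mapP/idP.
  - move=> [D DC ->]; rewrite ltnS; apply: half_leq; exact: (Hev D DC).2.
  - elim: x => [_|x IH hx]; first by exists m; rewrite // r0.
    have [D DC HD] := IH (ltnW hx).
    have rD : rho D = x.*2 by rewrite {1}(Hev D DC).1 -HD.
    have lt : rho D < rho M by rewrite HK rD ltn_double -ltnS.
    have [E EC rE] := succ D DC lt.
    exists E => //; rewrite rE rD.
    have -> : x.*2 + 2 = (x.+1).*2 by rewrite doubleS addn2.
    by rewrite doubleK.
have Hu : uniq (map (fun D => (rho D)./2) C).
  rewrite map_inj_in_uniq // => D E DC EC h.
  by apply: (chain_inj Hch DC EC); rewrite (Hev D DC).1 (Hev E EC).1 h.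
have Hp : perm_eq (map (fun D => (rho D)./2) C) (iota 0 K.+1).
  by apply: uniq_perm; rewrite ?iota_uniq // => x; rewrite Hmem mem_iota.
by rewrite -(size_map (fun D => (rho D)./2)) (perm_size Hp) size_iota /K rM.
Qed.

Lemma sat_nil D : saturated_chain P [::] -> P D -> False.
Proof.
move=> [_ Hmax] PD.
have Hch : is_chain P [:: D].
  split => //; split; first by move=> E; rewrite inE => /eqP ->.
  by move=> E F; rewrite !inE => /eqP -> /eqP ->; left; apply: rt_refl.
have Hsub : {subset [::] <= [:: D]} by [].
by have := Hmax _ Hch Hsub D; rewrite inE eqxx => /(_ isT).
Qed.

Lemma sat_len C1 C2 : saturated_chain P C1 -> saturated_chain P C2 ->
  chain_length C1 = chain_length C2.
Proof.
move=> H1 H2.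
case: (altP (C1 =P [::])) => [E1|n1]; case: (altP (C2 =P [::])) => [E2|n2].
- by rewrite E1 E2.
- exfalso; case: C2 n2 H2 => // D C2 _ H2.
  rewrite E1 in H1; apply: (sat_nil H1 (H2.1.2.1 D _)).
  by rewrite inE eqxx.
- exfalso; case: C1 n1 H1 => // D C1 _ H1.
  rewrite E2 in H2; apply: (sat_nil H2 (H1.1.2.1 D _)).
  by rewrite inE eqxx.
- by rewrite /chain_length (sat_size H1 n1) (sat_size H2 n2).
Qed.

End Core3.


Lemma touches_split i (x : Defs.arc) : gtS x.1 (Some x.2) ->
  touches i x = (x.1 == Some i) + (x.2 == i) :> nat.
Proof.
case: x => [[s|] t] /= H; rewrite /touches /=; last by case: (t == i).
case: (eqVneq (Some s) (Some i)) => [E|nE] /=; last by case: (t == i).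
case: E => Es; case: (eqVneq t i) => // Et.
by rewrite Et -Es ltnn in H.
Qed.

Lemma size_sumn (s : seq nat) : all (fun p => 0 < p) s -> size s <= sumn s.
Proof. by elim: s => //= x s IH /andP [x0 /IH]; lia. Qed.

Section Inst.
Variables (alpha beta gamma : seq nat) (T : nat -> nat -> nat).
Hypothesis Hbeta : is_partition beta.
Hypothesis HLR : is_LR_tableau alpha beta gamma T.
Hypothesis H1 : tab_count beta gamma T 2 = tab_count beta gamma T 1 \/
   tab_count beta gamma T 2 = (tab_count beta gamma T 1).-1.
Hypothesis H2 : forall i, 0 < i -> conjpart beta i - conjpart gamma i <= 1.
Hypothesis H3 : forall i j, 0 < row_count beta gamma T 2 j ->
  0 < row_count beta gamma T 1 i -> i < j.
Local Notation P := (in_DGamma alpha beta gamma T).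

Lemma gmove_P D F : gmove D F -> (P D <-> P F).
Proof.
move=> [a' [b [c [d [R [h1 h2 h3 -> ->]]]]]].
have ga : gtS a' (Some c) by apply: (gtS_trans h1).
have gd : gtS a' (Some d) by apply: (gtS_trans ga).
have e_all : all wf_arc (enum_mset ([mset (a', d); (Some b, c)] `+` R)) =
             all wf_arc (enum_mset ([mset (a', c); (Some b, d)] `+` R)).
  rewrite !(perm_all _ (perm_D2 _ _ _)) /= !andbA; congr (_ && _).
  rewrite /wf_arc /=; case: a' h1 ga gd => [a|] /= h1 ga gd; bsplit => //=; lia.
have e_np : count (fun x => ~~ is_pole x) (enum_mset ([mset (a', d); (Some b, c)] `+` R)) =
            count (fun x => ~~ is_pole x) (enum_mset ([mset (a', c); (Some b, d)] `+` R)).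
  by rewrite !count_D2.
have e_p : count is_pole (enum_mset ([mset (a', d); (Some b, c)] `+` R)) =
           count is_pole (enum_mset ([mset (a', c); (Some b, d)] `+` R)).
  by rewrite !count_D2.
have e_t : forall i, count (touches i) (enum_mset ([mset (a', d); (Some b, c)] `+` R)) =
           count (touches i) (enum_mset ([mset (a', c); (Some b, d)] `+` R)).
  move=> i; rewrite !count_D2 (touches_split i (x := (a',d)) gd) (touches_split i (x := (a',c)) ga).
  rewrite (touches_split i (x := (Some b, c)) h2) (touches_split i (x := (Some b, d)) _) /=;
    last by lia.
  lia.
have e_s : forall i, src_count ([mset (a', d); (Some b, c)] `+` R) i =
           src_count ([mset (a', c); (Some b, d)] `+` R) i.
  by move=> i; rewrite /src_count !count_D2.
rewrite /in_DGamma /is_arc_diagram e_all e_np e_p.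
split => [[[Ha Hn Hp Ht] Hs]|[[Ha Hn Hp Ht] Hs]]; split => //.
- by split => // i i0; rewrite -e_t Ht.
- by move=> i i0; rewrite -e_s Hs.
- by split => // i i0; rewrite e_t Ht.
- by move=> i i0; rewrite e_s Hs.
Qed.

Lemma P_wf D m : P D -> m \in enum_mset D -> 0 < m.2.
Proof.
by move=> [[Hall _ _ _] _] mD; have := allP Hall m mD; rewrite /wf_arc => /andP [].
Qed.

Lemma P_wf2 D m s : P D -> m \in enum_mset D -> m.1 = Some s -> m.2 < s.
Proof.
by move=> [[Hall _ _ _] _] mD Es; have := allP Hall m mD; rewrite /wf_arc Es => /andP [].
Qed.

Lemma P_tch D i : P D -> 0 < i -> count (touches i) (enum_mset D) <= 1.
Proof. by move=> [[_ _ _ Htc] _] i0; rewrite Htc // H2. Qed.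

Lemma P_pole D : P D -> count is_pole (enum_mset D) <= 1.
Proof.
move=> [[_ _ Hp _] _]; rewrite Hp.
have [_ _ [Hc1 Hc2] _] := HLR.
by move: H1; rewrite Hc1 Hc2 -subn1; lia.
Qed.

Lemma P_size D : P D ->
  size (enum_mset D) = conjpart alpha 2 + (conjpart alpha 1 - conjpart alpha 2).
Proof.
move=> [[_ Hn Hp _] _].
have := count_predC is_pole (enum_mset D).
have E : count (predC is_pole) (enum_mset D) =
         count (fun x => ~~ is_pole x) (enum_mset D) by apply: eq_count.
by rewrite E Hn Hp addnC.
Qed.

Lemma row_term i c k : c < bnd beta -> inskew beta gamma i c -> T i c = k ->
  0 < row_count beta gamma T k i.
Proof.
move=> Hc Hin HT; rewrite /row_count (bigD1 (Ordinal Hc)) //= Hin HT eqxx.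
by rewrite add1n.
Qed.

Lemma P_tgt D m : P D -> m \in enum_mset D -> 0 < row_count beta gamma T 1 m.2.
Proof.
move=> PD mD; set t := m.2.
have t0 : 0 < t := P_wf PD mD.
have [[Hall Hnp Hp Htc] Hsrc] := PD.
have Hr2 : row_count beta gamma T 2 t = 0.
  apply/eqP; rewrite -leqn0 leqNgt; apply/negP => Hr.
  have : 0 < src_count D t by rewrite Hsrc.
  rewrite /src_count -has_count => /hasP [m'' m''D /eqP Hm''].
  have nm : m'' != m.
    apply/eqP => E; have := P_wf2 PD mD (s := t); rewrite -E Hm'' /t E => /(_ erefl).
    by rewrite ltnn.
  have := two_count (p := touches t) nm m''D mD.
  rewrite /touches Hm'' /t !eqxx orbT => /(_ isT isT).
  by rewrite ltnNge (P_tch PD t0).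
have Hb : 0 < conjpart beta t - conjpart gamma t.
  rewrite -(Htc t t0) -has_count; apply/hasP; exists m => //.
  by rewrite /touches /t eqxx orbT.
set c0 := conjpart beta t.
have Hin : inskew beta gamma t c0.
  rewrite /inskew t0 leqnn andbT /=; rewrite /c0; lia.
have Hc0 : c0 < bnd beta.
  rewrite /bnd ltnS; apply: leq_trans (count_size _ _) (size_sumn _).
  by case/andP: Hbeta.
have [_ HT _ _] := HLR.
case: (HT t c0 Hin) => E.
- exact: row_term Hc0 Hin E.
- by have := row_term Hc0 Hin E; rewrite Hr2.
Qed.

Lemma P_st D m m' : P D -> m \in enum_mset D -> m' \in enum_mset D ->
  gtS m.1 (Some m'.2).
Proof.
move=> PD mD m'D; case Em: m.1 => [s|] //=.
have ms := P_wf2 PD mD Em.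
have s0 : 0 < s by apply: leq_ltn_trans ms.
have [_ Hsrc] := PD.
have Hr : 0 < row_count beta gamma T 2 s.
  rewrite -Hsrc // /src_count -has_count; apply/hasP; exists m => //.
  by rewrite Em.
exact: H3 Hr (P_tgt PD m'D).
Qed.

Lemma P_sig D E : P D -> P E -> sigma D = sigma E.
Proof.
move=> PD PE.
have Hperm : perm_eq (map fst (enum_mset D)) (map fst (enum_mset E)).
  have no0 : forall X, P X -> count (preim fst (pred1 (Some 0))) (enum_mset X) = 0.
    move=> X PX; apply/eqP; rewrite -leqn0 leqNgt -has_count; apply/hasPn => m mX /=.
    apply/negP => /eqP Em; have := P_wf2 PX mX Em; by [].
  apply/allP => o _ /=; rewrite !count_map; apply/eqP.
  case: o => [i|].
  - case: (posnP i) => [->|i0]; first by rewrite !no0.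
    have [_ HsD] := PD; have [_ HsE] := PE.
    have := HsD i i0; have := HsE i i0; rewrite /src_count => <-.
    have eq1 : forall X : diagram, count (preim fst (pred1 (Some i))) (enum_mset X) =
        count (fun x : Defs.arc => x.1 == Some i) (enum_mset X) by move=> X; apply: eq_count.
    by rewrite !eq1 => ->.
  - have [[_ _ HpD _] _] := PD; have [[_ _ HpE _] _] := PE.
    have eq1 : forall X : diagram, count (preim fst (pred1 None)) (enum_mset X) =
        count is_pole (enum_mset X) by move=> X; apply: eq_count.
    by rewrite !eq1 HpD HpE.
have Hs : forall X : diagram, sigma X =
    \sum_(o <- map fst (enum_mset X)) (if o is Some s then s else 0).
  by move=> X; rewrite big_map.
by rewrite !Hs (perm_big _ Hperm).
Qed.

End Inst.

Close Scope mset_scope.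

Theorem mainTheorem7 (alpha beta gamma : seq nat) (T : nat -> nat -> nat) :
  is_partition alpha -> is_partition beta -> is_partition gamma ->
  part alpha 1 <= 2 ->
  is_LR_tableau alpha beta gamma T ->
  (* (1) #2's = x or x - 1, where x = #1's *)
  (tab_count beta gamma T 2 = tab_count beta gamma T 1 \/
   tab_count beta gamma T 2 = (tab_count beta gamma T 1).-1) ->
  (* (2) every row contains at most one box *)
  (forall i, 0 < i -> conjpart beta i - conjpart gamma i <= 1) ->
  (* (3) a row containing a 2 lies below every row containing a 1 *)
  (forall i j, 0 < row_count beta gamma T 2 j -> 0 < row_count beta gamma T 1 i ->
      i < j) ->
  forall C1 C2 : seq diagram,
    saturated_chain (in_DGamma alpha beta gamma T) C1 ->
    saturated_chain (in_DGamma alpha beta gamma T) C2 ->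
    chain_length C1 = chain_length C2.
Proof.
move=> _ Hbeta _ _ HLR H1 H2 H3 C1 C2 S1 S2.
apply: (@sat_len (in_DGamma alpha beta gamma T)
          (conjpart alpha 2 + (conjpart alpha 1 - conjpart alpha 2))) S1 S2.
- by move=> D F g PF; apply: (proj2 (gmove_P alpha Hbeta H1 g)).
- by move=> D F g PD; apply: (proj1 (gmove_P alpha Hbeta H1 g)).
- move=> D E; exact: P_sig.
- move=> D m; exact: P_wf.
- move=> D m m'; exact: (P_st Hbeta HLR H1 H2 H3).
- move=> D i; exact: (P_tch H2).
- move=> D; exact: (P_pole Hbeta HLR H1).
- move=> D; exact: P_size.
Qed.
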